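(* Let $E$, $F$, $H_0$, $H_1$ be Hilbert spaces and let $L:E\to F$, $r_0:E\to H_0$, $r_1:E\to H_1$ be bounded linear maps such that $r_j\oplus L:E\to H_j\oplus F$ is an isomorphism for $j=0$ and for $j=1$. Let $Q:H_0\to H_1$ be the isomorphism $Q:=(r_1|_{\ker L})\circ(r_0|_{\ker L})^{-1}$ (note that $r_j$ restricts to an isomorphism $\ker(L)\to H_j$). Assume in addition that $r_0\oplus r_1:E\to H_0\oplus H_1$ is onto. Let $B_j\subset H_j$ ($j=0,1$) be closed linear subspaces and let $k\in\mathbb{Z}$. Then the following are equivalent: (i) The pair $(B_0,Q^{-1}B_1)$ is a Fredholm pair of index $k$ in $H_0$; (ii) The pair $(QB_0,B_1)$ is a Fredholm pair of index $k$ in $H_1$; (iii) The operator $(\pi_{B_0^\perp}\circ r_0)\oplus(\pi_{B_1^\perp}\circ r_1)\oplus L:E\to B_0^\perp\oplus B_1^\perp\oplus F$ is Fredholm of index $k$; (iv) The restriction $L:\ker(\pi_{B_0^\perp}\circ r_0)\cap\ker(\pi_{B_1^\perp}\circ r_1)\to F$ is a Fredholm operator of index $k$.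
   Context: For a closed subspace $V$ of a Hilbert space $H$, $\pi_V:H\to V$ denotes the orthogonal projection onto $V$. A pair $(B,B')$ of closed linear subspaces of a Hilbert space $H$ is called a Fredholm pair if $B\cap B'$ is finite dimensional and $B+B'$ is closed and of finite codimension in $H$; its index is $\mathrm{ind}(B,B')=\dim(B\cap B')-\dim(H/(B+B'))$. *)

(* Defs.v *)
From HB Require Import structures.
From mathcomp Require Import all_boot all_order all_algebra.
From mathcomp Require Import all_classical all_reals all_analysis.
Set Implicit Arguments. Unset Strict Implicit. Unset Printing Implicit Defensive.
Import Order.TTheory GRing.Theory Num.Theory.
Import numFieldNormedType.Exports.
Local Open Scope classical_set_scope.
Local Open Scope ring_scope.

Section Hilbert.
Variable R : realType.

(* A Hilbert space is a complete normed space whose norm comes from an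
   inner product.  [inner_product V] packages that inner product. *)
Record inner_product (V : normedModType R) := InnerProduct {
  ip : V -> V -> R;
  ip_sym : forall x y, ip x y = ip y x;
  ip_linear : forall a x y z, ip (a *: x + y) z = a * ip x z + ip y z;
  ip_norm : forall x, ip x x = `|x| ^+ 2 }.

Definition bounded_linear (U V : normedModType R) (f : U -> V) :=
  (forall (a : R) x y, f (a *: x + y) = a *: f x + f y) /\
  exists C : R, forall x, `|f x| <= C * `|x|.

Definition isomorphism (U V : normedModType R) (f : U -> V) :=
  bounded_linear f /\
  exists g : V -> U, [/\ bounded_linear g, cancel f g & cancel g f].

Definition subspace (V : normedModType R) (S : set V) :=
  S 0 /\ forall (a : R) x y, S x -> S y -> S (a *: x + y).

Definition closed_subspace (V : normedModType R) (S : set V) :=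
  subspace S /\ closed S.

Definition dim_eq (V : normedModType R) (S : set V) (n : nat) :=
  exists v : 'I_n -> V,
  [/\ forall i, S (v i),
      forall c : 'I_n -> R, \sum_i c i *: v i = 0 -> forall i, c i = 0
    & forall x, S x -> exists c : 'I_n -> R, x = \sum_i c i *: v i].

(* dim (W / S) = n, for a subspace S of W: there are n vectors of W whose
   classes form a basis of the quotient W / S. *)
Definition codim_eq (V : normedModType R) (W S : set V) (n : nat) :=
  exists w : 'I_n -> V,
  [/\ forall i, W (w i),
      forall c : 'I_n -> R, S (\sum_i c i *: w i) -> forall i, c i = 0
    & forall x, W x -> exists c : 'I_n -> R, S (x - \sum_i c i *: w i)].

Definition sum_set (V : normedModType R) (A B : set V) : set V :=
  [set x | exists u v, [/\ A u, B v & x = u + v]].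

Definition fredholm_pair (V : normedModType R) (B B' : set V) (k : int) :=
  exists a b : nat,
  [/\ dim_eq (B `&` B') a, closed (sum_set B B'),
      codim_eq setT (sum_set B B') b & k = (a%:Z - b%:Z)%R].

Definition fredholm_op (U V : normedModType R) (D : set U) (W : set V)
    (T : U -> V) (k : int) :=
  (forall x, D x -> W (T x)) /\
  exists a b : nat,
  [/\ dim_eq (D `&` [set x | T x = 0]) a, closed (T @` D),
      codim_eq W (T @` D) b & k = (a%:Z - b%:Z)%R].

Definition orth (V : normedModType R) (iV : inner_product V) (B : set V) : set V :=
  [set x | forall b, B b -> ip iV x b = 0].

Definition orth_proj (V : normedModType R) (iV : inner_product V) (B : set V)
    (x : V) : V :=
  xget 0 [set y | B y /\ forall b, B b -> ip iV (x - y) b = 0].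

Definition Qmap (E F H0 H1 : normedModType R) (L : E -> F) (r0 : E -> H0)
    (r1 : E -> H1) (h : H0) : H1 :=
  r1 (xget 0 [set e | L e = 0 /\ r0 e = h]).

End Hilbert.

(* Main.v *)
Require Import Defs.
From HB Require Import structures.
From mathcomp Require Import all_boot all_order all_algebra.
From mathcomp Require Import all_classical all_reals all_analysis.
Import Order.TTheory GRing.Theory Num.Theory.
Import numFieldNormedType.Exports.
Local Open Scope classical_set_scope.
Local Open Scope ring_scope.

From mathcomp Require Import ring lra.

Set Implicit Arguments. Unset Strict Implicit. Unset Printing Implicit Defensive.


Section Aux.
Variable R : realType.

Definition linP (U V : normedModType R) (f : U -> V) :=
  forall (a : R) x y, f (a *: x + y) = a *: f x + f y.

Section Lin.
Variables (U V : normedModType R) (f : U -> V) (lf : linP f).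
Let pf : {linear U -> V} := HB.pack f (GRing.isLinear.Build _ _ _ _ _ lf).
Lemma lin0 : f 0 = 0. Proof. exact: (linear0 pf). Qed.
Lemma linD x y : f (x + y) = f x + f y. Proof. exact: (linearD pf). Qed.
Lemma linN x : f (- x) = - f x. Proof. exact: (linearN pf). Qed.
Lemma linB x y : f (x - y) = f x - f y. Proof. exact: (linearB pf). Qed.
Lemma linZ a x : f (a *: x) = a *: f x.
Proof. by have := lf a x 0; rewrite !addr0 lin0 addr0. Qed.
Lemma lin_sum n (c : 'I_n -> R) (v : 'I_n -> U) :
  f (\sum_i c i *: v i) = \sum_i c i *: f (v i).
Proof. rewrite (big_morph f linD lin0); by apply: eq_bigr => i _; rewrite linZ. Qed.
End Lin.

Lemma linP_comp (U V W : normedModType R) (f : U -> V) (g : V -> W) :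
  linP f -> linP g -> linP (g \o f).
Proof. by move=> lf lg a x y /=; rewrite lf lg. Qed.

Section Sub.
Variables (U : normedModType R) (S : set U) (hS : Defs.subspace S).
Lemma sub0 : S 0. Proof. by have [] := hS. Qed.
Lemma subD x y : S x -> S y -> S (x + y).
Proof. by have [_ h] := hS => Sx Sy; have := h 1 x y Sx Sy; rewrite scale1r. Qed.
Lemma subZ a x : S x -> S (a *: x).
Proof. by have [h0 h] := hS => Sx; have := h a x 0 Sx h0; rewrite addr0. Qed.
Lemma subN x : S x -> S (- x).
Proof. by move=> Sx; rewrite -scaleN1r; exact: subZ. Qed.
Lemma subB x y : S x -> S y -> S (x - y).
Proof. by move=> Sx Sy; apply: subD => //; exact: subN. Qed.
Lemma sub_sum n (c : 'I_n -> R) (v : 'I_n -> U) :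
  (forall i, S (v i)) -> S (\sum_i c i *: v i).
Proof.
move=> Sv; elim/big_ind: _ => //; [exact: sub0|exact: subD|].
by move=> i _; apply: subZ.
Qed.
End Sub.

Lemma subspaceT (U : normedModType R) : Defs.subspace (@setT U).
Proof. by []. Qed.

Lemma closed_epsP (U : normedModType R) (A : set U) :
  closed A <-> (forall x, (forall e, 0 < e -> exists a, A a /\ `|x - a| < e) -> A x).
Proof.
split.
- move=> cA x hx; apply: cA => B /nbhs_ballP [e e0 sB].
  have [a [Aa xa]] := hx e e0; exists a; split => //; apply: sB.
  by rewrite -ball_normE.
- move=> h x clx; apply: h => e e0.
  have [a [Aa ba]] := clx _ (nbhsx_ballx x _ e0).
  exists a; split => //; by move: ba; rewrite -ball_normE.
Qed.

Lemma dim_transfer (V U : normedModType R) (phi : V -> U) (psi : U -> V)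
  (X : set V) (Y : set U) n :
  linP phi -> linP psi -> (forall y, Y y -> X (psi y)) ->
  (forall x, X x -> Y (phi x)) -> (forall x, X x -> psi (phi x) = x) ->
  (forall y, Y y -> phi (psi y) = y) -> dim_eq X n -> dim_eq Y n.
Proof.
move=> lphi lpsi YX XY psiphi phipsi [v [Xv ind sp]].
exists (fun i => phi (v i)); split.
- by move=> i; apply: XY.
- move=> c hc; apply: ind.
  have <- : \sum_i c i *: psi (phi (v i)) = \sum_i c i *: v i.
    by apply: eq_bigr => i _; rewrite psiphi.
  by rewrite -lin_sum // hc lin0.
- move=> y Yy; have [c hc] := sp _ (YX _ Yy); exists c.
  by rewrite -lin_sum // -hc phipsi.
Qed.

Lemma codim_pull (V U : normedModType R) (A : V -> U) (W : set V) (S : set U) n :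
  linP A -> Defs.subspace W -> (forall h, exists x, W x /\ A x = h) ->
  codim_eq setT S n -> codim_eq W (W `&` A @^-1` S) n.
Proof.
move=> lA sW sur [w [_ ind sp]].
have [s hs] := choice sur.
have E c : \sum_i c i *: A (s (w i)) = \sum_i c i *: w i.
  by apply: eq_bigr => i _; rewrite (proj2 (hs _)).
exists (fun i => s (w i)); split.
- by move=> i; case: (hs (w i)).
- move=> c [_ hc]; apply: ind; move: hc; by rewrite /preimage /= lin_sum // E.
- move=> x Wx; have [c hc] := sp (A x) I; exists c; split.
  + by apply: subB => //; apply: sub_sum => // i; case: (hs (w i)).
  + by rewrite /preimage /= linB // lin_sum // E.
Qed.

Lemma codim_push (V U : normedModType R) (A : V -> U) (W : set V) (S : set U) n :
  linP A -> Defs.subspace W -> (forall h, exists x, W x /\ A x = h) ->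
  codim_eq W (W `&` A @^-1` S) n -> codim_eq setT S n.
Proof.
move=> lA sW sur [w [Ww ind sp]].
exists (fun i => A (w i)); split => //.
- move=> c hc; apply: ind; split; first exact: sub_sum.
  by rewrite /preimage /= lin_sum.
- move=> h _; have [x [Wx <-]] := sur h; have [c [_ hc]] := sp x Wx; exists c.
  by move: hc; rewrite /preimage /= linB // lin_sum.
Qed.

Lemma closed_pull (V U : normedModType R) (A : V -> U) (W : set V) (S : set U) C :
  linP A -> (forall x, `|A x| <= C * `|x|) -> closed W -> closed S ->
  closed (W `&` A @^-1` S).
Proof.
move=> lA bA cW cS; apply/closed_epsP => x hx; split.
- apply: (proj1 (closed_epsP _) cW) => e e0.
  by have [a [[Wa _] xa]] := hx e e0; exists a.
- apply: (proj1 (closed_epsP _) cS) => e e0.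
  have C1 : 0 < `|C| + 1 by rewrite ltr_wpDl.
  have [a [[_ Sa] xa]] := hx (e / (`|C|+1)) (divr_gt0 e0 C1).
  exists (A a); split => //.
  rewrite -linB //; apply: le_lt_trans (bA _) _.
  have h1 : `|x - a| * (`|C| + 1) < e by rewrite -ltr_pdivlMr.
  have h2 : C <= `|C| := ler_norm C.
  have h3 : 0 <= `|x - a| := normr_ge0 _.
  nra.
Qed.

Lemma closed_push (V U : normedModType R) (A : V -> U) (W : set V) (S : set U) C :
  linP A -> Defs.subspace W ->
  (forall h, exists x, [/\ W x, A x = h & `|x| <= C * `|h|]) ->
  closed (W `&` A @^-1` S) -> closed S.
Proof.
move=> lA sW sur cX; apply/closed_epsP => h hh.
have [x [Wx Axh _]] := sur h.
suff [_] : (W `&` A @^-1` S) x by rewrite /preimage /= Axh.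
apply: (proj1 (closed_epsP _) cX) => e e0.
have C1 : 0 < `|C| + 1 by rewrite ltr_wpDl.
have [h' [Sh' hh']] := hh (e / (`|C|+1)) (divr_gt0 e0 C1).
have [d [Wd Ad dle]] := sur (h - h').
exists (x - d); split; [split|].
- exact: subB.
- by rewrite /preimage/= linB // Axh Ad opprB addrC subrK.
- have -> : x - (x - d) = d by rewrite opprB addrC subrK.
  apply: le_lt_trans dle _.
  have h1 : `|h - h'| * (`|C| + 1) < e by rewrite -ltr_pdivlMr.
  have h2 : C <= `|C| := ler_norm C.
  have h3 : 0 <= `|h - h'| := normr_ge0 _.
  nra.
Qed.

End Aux.


Section Seq.
Variable R : realType.

Lemma small_inv (e : R) : 0 < e -> exists N : nat, N.+1%:R^-1 < e.
Proof.
move=> e0; have [N _ hN] := nbhs_infty_ger (e^-1 + 1).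
exists N; have := hN N (leqnn N) => h.
have Npos : 0 < N.+1%:R :> R by rewrite ltr0n.
rewrite invf_plt // ?invr_gt0 //.
rewrite -natr1; lra.
Qed.

Lemma cauchy_lim (V : completeNormedModType R) (u : nat -> V) :
  (forall e, 0 < e -> exists N, forall m, (N <= m)%N -> `|u N - u m| < e) ->
  exists y, forall e, 0 < e -> exists N, forall m, (N <= m)%N -> `|y - u m| < e.
Proof.
move=> hc.
have : cauchy (u @ \oo).
  apply: cauchy_exP => e e0; have [N hN] := hc e e0.
  exists (u N); exists N => // m /= Nm; rewrite -ball_normE; exact: hN.
move=> /cauchy_cvg hcv; exists (lim (u @ \oo)) => e e0.
move/cvgrPdist_lt: hcv => /(_ e e0) [N _ hN].
by exists N => m Nm; apply: hN.
Qed.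

Section Hilb.
Variables (V : normedModType R) (iV : inner_product V).
Local Notation ipv := (ip iV).

Lemma ip0l z : ipv 0 z = 0.
Proof.
have := ip_linear iV 1 0 0 z; rewrite scale1r addr0 mul1r => h.
by have := congr1 (fun t => t - ipv 0 z) h; rewrite subrr addrK => <-.
Qed.
Lemma ipDl x y z : ipv (x + y) z = ipv x z + ipv y z.
Proof. by have := ip_linear iV 1 x y z; rewrite scale1r mul1r. Qed.
Lemma ipZl a x z : ipv (a *: x) z = a * ipv x z.
Proof. by have := ip_linear iV a x 0 z; rewrite addr0 ip0l addr0. Qed.
Lemma ipNl x z : ipv (- x) z = - ipv x z.
Proof. by rewrite -scaleN1r ipZl mulN1r. Qed.
Lemma ipBl x y z : ipv (x - y) z = ipv x z - ipv y z.
Proof. by rewrite ipDl ipNl. Qed.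
Lemma ip0r z : ipv z 0 = 0.
Proof. by rewrite ip_sym ip0l. Qed.
Lemma ipDr x y z : ipv z (x + y) = ipv z x + ipv z y.
Proof. by rewrite ip_sym ipDl !(ip_sym _ z). Qed.
Lemma ipZr a x z : ipv z (a *: x) = a * ipv z x.
Proof. by rewrite ip_sym ipZl (ip_sym _ z). Qed.
Lemma ipNr x z : ipv z (- x) = - ipv z x.
Proof. by rewrite ip_sym ipNl (ip_sym _ z). Qed.
Lemma ipBr x y z : ipv z (x - y) = ipv z x - ipv z y.
Proof. by rewrite ipDr ipNr. Qed.
Lemma ipxx x : ipv x x = `|x| ^+ 2.
Proof. exact: ip_norm. Qed.
Lemma ipxx_ge0 x : 0 <= ipv x x.
Proof. by rewrite ipxx sqr_ge0. Qed.
Lemma ipxx_eq0 x : ipv x x = 0 -> x = 0.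
Proof. by rewrite ipxx => /eqP; rewrite sqrf_eq0 normr_eq0 => /eqP. Qed.

Lemma ip_expand a b x y :
  ipv (a *: x + b *: y) (a *: x + b *: y) =
  a ^+ 2 * ipv x x + 2 * a * b * ipv x y + b ^+ 2 * ipv y y.
Proof.
rewrite !ipDl !ipDr !ipZl !ipZr (ip_sym _ y x); ring.
Qed.

Lemma cauchy_schwarz x y : `|ipv x y| <= `|x| * `|y|.
Proof.
have [->|y0] := eqVneq y 0; first by rewrite ip0r normr0 normr0 mulr0.
set p := ipv x y; set q := ipv y y.
have q0 : 0 < q.
  rewrite lt_def ipxx_ge0 andbT; apply/eqP => /ipxx_eq0 /eqP; exact/negP.
have := ipxx_ge0 (q *: x + (- p) *: y); rewrite ip_expand -/p -/q => h.
have h2 : p ^+ 2 <= q * ipv x x by nra.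
move: h2; rewrite /q !ipxx => h2.
have hp : `|p| ^+ 2 = p ^+ 2 by rewrite real_normK ?num_real.
have n1 := normr_ge0 x; have n2 := normr_ge0 y; have n3 := normr_ge0 p.
have h4 : 0 <= `|x| * `|y| by rewrite mulr_ge0.
rewrite leNgt; apply/negP => hlt.
have h5 : (`|x| * `|y|) * (`|x| * `|y|) < `|p| * `|p|.
  by apply: ltr_pM => //.
nra.
Qed.

End Hilb.

Lemma inv_pos (n : nat) : 0 < n.+1%:R^-1 :> R.
Proof. by rewrite invr_gt0 ltr0Sn. Qed.

Lemma min_orth (p q : R) : 0 <= q -> (forall t, 0 <= t ^+ 2 * q - 2 * t * p) -> p = 0.
Proof.
move=> q0 h; set t := p / (q + 1).
have q1 : q + 1 != 0 by rewrite gt_eqF // ltr_wpDl.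
have ht : p = t * (q + 1) by rewrite /t divfK.
have h1 := h t; clearbody t.
have : t = 0 by nra.
by rewrite ht => ->; rewrite mul0r.
Qed.

Lemma closed_nball (U : normedModType R) (x : U) (r : R) :
  closed [set z | `|x - z| <= r].
Proof.
apply/closed_epsP => z hz /=; apply/ler_addgt0Pr => e e0.
have [a [ha hza]] := hz e e0.
have : `|x - z| <= `|x - a| + `|a - z|.
  by rewrite (le_trans _ (ler_normD _ _)) // addrA subrK.
rewrite distrC in hza; move: ha => /= ha; lra.
Qed.

Section Proj.
Variables (V : completeNormedModType R) (iV : inner_product V).
Local Notation ipv := (ip iV).

Lemma proj_ex (B : set V) : closed_subspace B ->
  forall x, exists y, B y /\ forall b, B b -> ipv (x - y) b = 0.
Proof.
move=> [sB cB] x.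
pose D := [set r | exists b, B b /\ r = `|x - b| ^+ 2].
have D0 : D !=set0 by exists (`|x - 0| ^+ 2); exists 0; split => //; exact: sub0.
have Dlb : has_lbound D by exists 0 => r [b [_ ->]]; rewrite sqr_ge0.
pose d := inf D.
have hd b : B b -> d <= `|x - b| ^+ 2 by move=> Bb; apply: ge_inf => //; exists b.
have d0 : 0 <= d by apply: lb_le_inf => // r [b [_ ->]]; rewrite sqr_ge0.
have hb (n : nat) : exists b, B b /\ `|x - b| ^+ 2 < d + n.+1%:R^-1.
  have [r [b [Bb ->]] hr] := inf_adherent (inv_pos n) (conj D0 Dlb).
  by exists b.
have [b hbn] := choice hb.
have par n m : `|b n - b m| ^+ 2 <= 2 * n.+1%:R^-1 + 2 * m.+1%:R^-1.
  set u := x - b n; set v := x - b m.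
  have e1 : b n - b m = v - u.
    by rewrite /u /v opprD opprK addrACA subrr add0r addrC.
  have Bmid : B (2^-1 *: (b n + b m)).
    by apply: subZ => //; apply: subD => //; [case: (hbn n) | case: (hbn m)].
  have e2 : x - 2^-1 *: (b n + b m) = 2^-1 *: u + 2^-1 *: v.
    rewrite /u /v !scalerBr addrACA -scalerDl -opprD -scalerDr.
    have -> : (2^-1 + 2^-1 : R) = 1 by field.
    by rewrite scale1r.
  have hmid := hd _ Bmid; rewrite e2 -(ipxx iV) ip_expand in hmid.
  have hu := proj2 (hbn n); have hv := proj2 (hbn m).
  rewrite -/u -/v in hu hv; rewrite e1.
  clearbody u v.
  rewrite -!(ipxx iV) in hu hv *; rewrite ipBl !ipBr (ip_sym _ v u).
  have hmid' : 4 * d <= ipv u u + 2 * ipv u v + ipv v v.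
    move: hmid.
    have -> : 2^-1 ^+ 2 * ipv u u + 2 / 2 / 2 * ipv u v + 2^-1 ^+ 2 * ipv v v
      = (ipv u u + 2 * ipv u v + ipv v v) / 4 by field.
    by rewrite ler_pdivlMr // mulrC.
  move: hu hv hmid'; rewrite (mulrC 2 (n.+1%:R^-1)) (mulrC 2 (m.+1%:R^-1)); clearbody d; set a := n.+1%:R^-1; set c := m.+1%:R^-1; clearbody a c; move=> hu hv hmid'. lra.
have cau : forall e, 0 < e -> exists N, forall m, (N <= m)%N -> `|b N - b m| < e.
  move=> e e0; have four : (0 : R) < 4 by [].
  have [N hN] := small_inv (divr_gt0 (mulr_gt0 e0 e0) four).
  exists N => m Nm; have := par N m.
  have hmN : m.+1%:R^-1 <= N.+1%:R^-1 :> R.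
    by rewrite lef_pV2 ?posrE ?ltr0Sn // ler_nat ltnS.
  move=> hp; have n0 := normr_ge0 (b N - b m).
  rewrite ltNge; apply/negP => hge.
  have : e * e <= `|b N - b m| * `|b N - b m| by apply: ler_pM => //; exact: ltW.
  move: hN hmN hp; set z := N.+1%:R^-1; set z' := m.+1%:R^-1.
  rewrite ltr_pdivlMr // => hN hmN hp.
  clearbody z z'; set w := `|b N - b m|; clearbody w.
  move=> h1; nra.
have [y hy] := cauchy_lim cau.
have By : B y.
  apply: (proj1 (closed_epsP _) cB) => e e0; have [N hN] := hy e e0.
  by exists (b N); split; [case: (hbn N)| exact: hN].
have xy : `|x - y| ^+ 2 <= d.
  apply/ler_addgt0Pr => e e0.
  have de0 : 0 < d + e by rewrite ltr_wpDl.
  set r := Num.sqrt (d + e).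
  have r0 : 0 < r by rewrite sqrtr_gt0.
  have hr : r ^+ 2 = d + e by rewrite sqr_sqrtr // ltW.
  suff : [set z | `|x - z| <= r] y.
    rewrite /= => hxy.
    have := normr_ge0 (x - y); nra.
  apply: (proj1 (closed_epsP _) (@closed_nball _ x r)) => eta eta0.
  have [N1 hN1] := hy eta eta0; have [N2 hN2] := small_inv e0.
  exists (b (maxn N1 N2)); split; last by apply: hN1; rewrite leq_maxl.
  rewrite /=.
  have := proj2 (hbn (maxn N1 N2)).
  have : (maxn N1 N2).+1%:R^-1 <= N2.+1%:R^-1 :> R.
    by rewrite lef_pV2 ?posrE ?ltr0Sn // ler_nat ltnS leq_maxr.
  move=> h1 h2; rewrite leNgt; apply/negP => h3.
  have h4 : r * r < `|x - b (maxn N1 N2)| * `|x - b (maxn N1 N2)|.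
    by apply: ltr_pM => //; exact: ltW.
  rewrite expr2 in h2.
  have hr' : r * r = d + e by rewrite -expr2.
  have h5 : (maxn N1 N2).+1%:R^-1 < e by apply: le_lt_trans h1 hN2.
  move: h5 h2 h4 hr'; clearbody r; clear.
  set a := (maxn N1 N2).+1%:R^-1; set w := `|x - b (maxn N1 N2)|.
  clearbody a w. move=> *. lra.
exists y; split => // c Bc.
apply: (@min_orth _ (ipv c c)); first exact: ipxx_ge0.
move=> t; have := hd (y + t *: c) (subD sB By (subZ sB t Bc)).
have -> : x - (y + t *: c) = 1 *: (x - y) + (- t) *: c.
  by rewrite scale1r opprD addrA scaleNr.
rewrite -(ipxx iV) ip_expand; rewrite -(ipxx iV) in xy.
move=> h; move: xy h; clearbody d; clear.
set p := ipv (x - y) c; set q := ipv c c; set w := ipv (x - y) (x - y).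
clearbody p q w => *; nra.
Qed.

End Proj.

Section Orth.
Variables (V : completeNormedModType R) (iV : inner_product V).
Local Notation ipv := (ip iV).

Lemma orth_sub (B : set V) : Defs.subspace (orth iV B).
Proof.
split; first by move=> b _; rewrite ip0l.
by move=> a x y hx hy b Bb; rewrite ip_linear hx // hy // mulr0 addr0.
Qed.

Lemma orth_closed (B : set V) : closed (orth iV B).
Proof.
apply/closed_epsP => x hx b Bb; apply/eqP; rewrite -normr_le0.
apply/ler_addgt0Pr => e e0; rewrite add0r.
have nb := normr_ge0 b.
have b1 : 0 < `|b| + 1 by rewrite ltr_wpDl.
have [a [ha xa]] := hx (e / (`|b| + 1)) (divr_gt0 e0 b1).
have -> : ipv x b = ipv (x - a) b by rewrite ipBl (ha b Bb) subr0.
apply: le_trans (cauchy_schwarz _ _ _) _.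
have h1 : `|x - a| * (`|b| + 1) < e by rewrite -ltr_pdivlMr.
have := normr_ge0 (x - a); nra.
Qed.

Lemma orth_cs (B : set V) : closed_subspace (orth iV B).
Proof. by split; [exact: orth_sub | exact: orth_closed]. Qed.

Lemma orth_orth (B : set V) : closed_subspace B ->
  forall x, orth iV (orth iV B) x <-> B x.
Proof.
move=> cB x; split; last by move=> Bx c hc; rewrite ip_sym hc.
move=> hx; have [y [By hy]] := proj_ex iV cB x.
have o1 : orth iV B (x - y) by move=> b Bb; exact: hy.
have e1 : ipv x (x - y) = 0 := hx _ o1.
have e2 : ipv y (x - y) = 0 by rewrite ip_sym; exact: hy.
have : ipv (x - y) (x - y) = 0 by rewrite ipBl e1 e2 subr0.
by move=> /ipxx_eq0 /eqP; rewrite subr_eq0 => /eqP ->.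
Qed.

Lemma proj_spec (C : set V) : closed_subspace C -> forall x,
  C (orth_proj iV C x) /\ forall c, C c -> ipv (x - orth_proj iV C x) c = 0.
Proof.
move=> cC x; rewrite /orth_proj.
exact: (xgetPex 0 (proj_ex iV cC x)).
Qed.

Lemma proj_uniq (C : set V) : closed_subspace C -> forall x y, C y ->
  (forall c, C c -> ipv (x - y) c = 0) -> orth_proj iV C x = y.
Proof.
move=> cC x y Cy hy; have [Cp hp] := proj_spec cC x.
set p := orth_proj iV C x in Cp hp *.
have Cd : C (p - y) by apply: subB => //; case: cC.
have : ipv (p - y) (p - y) = 0.
  have e : p - y = (x - y) - (x - p).
    by rewrite opprB [RHS]addrC [RHS]addrA subrK.
  by rewrite {1}e ipBl hy // hp // subr0.
by move=> /ipxx_eq0 /eqP; rewrite subr_eq0 => /eqP.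
Qed.

Section ProjB.
Variables (B : set V) (cB : closed_subspace B).
Local Notation pi := (orth_proj iV (orth iV B)).

Lemma projB_in x : orth iV B (pi x).
Proof. exact: (proj1 (proj_spec (orth_cs B) x)). Qed.

Lemma projB_rem x : B (x - pi x).
Proof.
apply/(orth_orth cB) => c hc; exact: (proj2 (proj_spec (orth_cs B) x)).
Qed.

Lemma projB_eq x y : orth iV B y -> B (x - y) -> pi x = y.
Proof.
move=> oy Bxy; apply: proj_uniq => //; first exact: orth_cs.
by move=> c hc; rewrite ip_sym; apply: hc.
Qed.

Lemma projB_0 x : pi x = 0 <-> B x.
Proof.
split.
- by move=> h; have := projB_rem x; rewrite h subr0.
- move=> Bx; apply: projB_eq; first by case: (orth_sub B).
  by rewrite subr0.
Qed.
End ProjB.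

Lemma riesz (phi : V -> R) C :
  (forall a x y, phi (a *: x + y) = a * phi x + phi y) ->
  (forall x, `|phi x| <= C * `|x|) -> exists z, forall x, phi x = ipv z x.
Proof.
move=> lphi bphi.
have phi0 : phi 0 = 0.
  have := lphi 1 0 0; rewrite scale1r addr0 mul1r => h.
  by have := congr1 (fun t => t - phi 0) h; rewrite subrr addrK => <-.
have phiD x y : phi (x + y) = phi x + phi y.
  by have := lphi 1 x y; rewrite scale1r mul1r.
have phiZ a x : phi (a *: x) = a * phi x.
  by have := lphi a x 0; rewrite !addr0 phi0 addr0.
have phiB x y : phi (x - y) = phi x - phi y.
  by rewrite phiD -scaleN1r phiZ mulN1r.
pose K := [set x | phi x = 0].
have cK : closed_subspace K.
  split; first split.
  - exact: phi0.
  - by move=> a x y hx hy; rewrite /K /= lphi hx hy mulr0 addr0.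
  - apply/closed_epsP => x hx; rewrite /K /=; apply/eqP; rewrite -normr_le0.
    apply/ler_addgt0Pr => e e0; rewrite add0r.
    have C1 : 0 < `|C| + 1 by rewrite ltr_wpDl.
    have [a [ha xa]] := hx (e / (`|C| + 1)) (divr_gt0 e0 C1).
    have -> : phi x = phi (x - a) by rewrite phiB ha subr0.
    apply: le_trans (bphi _) _.
    have h1 : `|x - a| * (`|C| + 1) < e by rewrite -ltr_pdivlMr.
    have := normr_ge0 (x - a); have := ler_norm C; nra.
case: (pselect (exists u, phi u != 0)); last first.
  move=> h; exists 0 => x; rewrite ip0l.
  by apply/eqP; apply: contra_notT h => h; exists x.
move=> [u hu]; have [k [Kk hk]] := proj_ex iV cK u.
set w := u - k in hk.
have pw : phi w = phi u by rewrite /w phiB Kk subr0.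
have ww : ipv w w != 0.
  apply/eqP => /ipxx_eq0 w0; move: hu; rewrite -pw w0 phi0 eqxx //.
have pw0 : phi w != 0 by rewrite pw.
exists ((phi w / ipv w w) *: w) => x.
have Kx : K (x - (phi x / phi w) *: w).
  by rewrite /K /= phiB phiZ divfK // subrr.
have := hk _ Kx; rewrite ipBr ipZr => /eqP; rewrite subr_eq0 => /eqP hx.
rewrite ipZl hx; field.
by rewrite ww pw0.
Qed.

End Orth.

End Seq.


Section OpenMap.
Variable R : realType.

Lemma open_map (F H : completeNormedModType R) (iF : inner_product F)
  (iH : inner_product H) (M : F -> H) CM0 :
  linP M -> (forall x, `|M x| <= CM0 * `|x|) -> (forall h, exists f, M f = h) ->
  exists C, forall h, exists f, M f = h /\ `|f| <= C * `|h|.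
Proof.
move=> lM bM0 sM.
set CM := `|CM0|.
have CM0p : 0 <= CM by rewrite normr_ge0.
have bM x : `|M x| <= CM * `|x|.
  by apply: le_trans (bM0 x) _; apply: ler_wpM2r; [exact: normr_ge0| exact: ler_norm].
have adj y : exists z, forall f, ip iH (M f) y = ip iF z f.
  apply: (@riesz _ _ iF (fun f => ip iH (M f) y) (CM * `|y|)).
  - by move=> a x x'; rewrite lM ipDl ipZl.
  - move=> x; apply: le_trans (cauchy_schwarz _ _ _) _.
    by rewrite mulrAC; apply: ler_wpM2r; [exact: normr_ge0 | exact: bM].
have [Ms hMs] := choice adj.
have ipeq0 (d : F) : (forall f, ip iF d f = 0) -> d = 0.
  by move=> h; apply: (ipxx_eq0 (h d)).
have lMs : linP Ms.
  move=> a y y'; apply/eqP; rewrite -subr_eq0; apply/eqP; apply: ipeq0 => f.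
  rewrite !ipBl !ipDl !ipZl -!hMs ipDr ipZr; ring.
have Ms0 : Ms 0 = 0 := lin0 lMs.
have Msbound y : `|Ms y| <= CM * `|y|.
  have h : `|Ms y| ^+ 2 <= CM * `|y| * `|Ms y|.
    rewrite -(ipxx iF) -hMs; apply: le_trans (ler_norm _) _.
    apply: le_trans (cauchy_schwarz _ _ _) _.
    rewrite mulrAC; apply: ler_wpM2r; [exact: normr_ge0 | exact: bM].
  have n0 := normr_ge0 (Ms y); have n1 := normr_ge0 y.
  have [->|hp] := eqVneq `|Ms y| 0; first by rewrite mulr_ge0.
  have hp' : 0 < `|Ms y| by rewrite lt_def hp n0.
  rewrite expr2 in h; move: h; rewrite ler_pM2r //.
have Msnz y : Ms y = 0 -> y = 0.
  move=> h0; have [f hf] := sM y; apply: (ipxx_eq0 (iV := iH)).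
  by rewrite -{1}hf hMs h0 ip0l.
pose Fam := [set g : H -> R^o | exists y, `|y| = 1 /\ g = fun h => ip iH y h / `|Ms y|].
have npos y : `|y| = 1 -> 0 < `|Ms y|.
  move=> y1; rewrite lt_def normr_ge0 andbT normr_eq0; apply/eqP => /Msnz y0.
  by move: y1; rewrite y0 normr0 => /eqP; rewrite eq_sym oner_eq0.
have BS : uniform_bounded Fam.
  apply: Banach_Steinhauss.
  - move=> g [y [y1 ->]]; split.
    + move=> r; exists (r / `|Ms y|) => x xr.
      rewrite normrM normfV normr_id ler_pM2r ?invr_gt0 ?npos //.
      apply: le_trans (cauchy_schwarz _ _ _) _; rewrite y1 mul1r //.
    + move=> a u v /=; rewrite ipDr ipZr.
      by rewrite mulrDl -mulrA.
  - move=> h; have [f hf] := sM h; exists `|f| => g [y [y1 ->]].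
    rewrite -hf ip_sym hMs normrM normfV normr_id.
    rewrite ler_pdivrMr ?npos //; apply: le_trans (cauchy_schwarz _ _ _) _.
    by rewrite mulrC.
have [K hK] := BS 1.
have below y : `|y| <= K * `|Ms y|.
  have [->|y0] := eqVneq y 0; first by rewrite normr0 Ms0 normr0 mulr0.
  have ny : 0 < `|y| by rewrite normr_gt0.
  set y' := `|y|^-1 *: y.
  have y'1 : `|y'| = 1 by rewrite normrZ normfV normr_id mulVf // gt_eqF.
  have hy' : Fam (fun h => ip iH y' h / `|Ms y'|) by exists y'.
  have := hK _ hy' y'; rewrite y'1 lexx => /(_ isT).
  have mpos : 0 < `|Ms y| by rewrite normr_gt0; apply/eqP => /Msnz; apply/eqP.
  rewrite ipxx y'1 expr1n /y' (linZ lMs) normrZ normfV normr_id.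
  rewrite normr1 mul1r normrZ normfV normr_id invfM invrK.
  by rewrite ler_pdivrMr.
have K0 : 0 <= `|K| := normr_ge0 K.
have below' y : `|y| <= `|K| * `|Ms y|.
  by apply: le_trans (below y) _; apply: ler_wpM2r; [exact: normr_ge0|exact: ler_norm].
pose Rg := [set f | exists y, f = Ms y].
have cRg : closed_subspace Rg.
  split; first split.
  - by exists 0; rewrite Ms0.
  - by move=> a x x' [y ->] [y' ->]; exists (a *: y + y'); rewrite lMs.
  apply/closed_epsP => x hx.
  have hy (n : nat) : exists y, `|x - Ms y| < n.+1%:R^-1.
    by have [a [[y ->] ha]] := hx _ (@inv_pos R n); exists y.
  have [yn hyn] := choice hy.
  have cau : forall e, 0 < e -> exists N, forall m, (N <= m)%N -> `|yn N - yn m| < e.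
    move=> e e0.
    have K1 : 0 < 2 * (`|K| + 1) by rewrite mulr_gt0 // ltr_wpDl.
    have [N hN] := small_inv (divr_gt0 e0 K1).
    exists N => m Nm.
    have hmN : m.+1%:R^-1 <= N.+1%:R^-1 :> R.
      by rewrite lef_pV2 ?posrE ?ltr0Sn // ler_nat ltnS.
    apply: le_lt_trans (below' _) _; rewrite (linB lMs).
    have tri : `|Ms (yn N) - Ms (yn m)| <= `|x - Ms (yn N)| + `|x - Ms (yn m)|.
      rewrite (distrC x); apply: le_trans (ler_normD _ _).
      by rewrite addrA subrK.
    have h1 := hyn N; have h2 := hyn m.
    have h3 : `|Ms (yn N) - Ms (yn m)| < 2 * N.+1%:R^-1.
      move: h1 h2 hmN tri; set a := `|x - Ms (yn N)|; set b := `|x - Ms (yn m)|.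
      set c := `|Ms (yn N) - Ms (yn m)|; set zN := N.+1%:R^-1; set zm := m.+1%:R^-1.
      clearbody a b c zN zm => *; lra.
    move: hN; rewrite ltr_pdivlMr // => hN.
    have := normr_ge0 (Ms (yn N) - Ms (yn m)).
    move: h3 hN; set z := N.+1%:R^-1; set w := `|Ms (yn N) - Ms (yn m)|.
    clearbody z w => h3 hN hw; nra.
  have [yl hyl] := cauchy_lim cau.
  exists yl; apply/eqP; rewrite -subr_eq0 -normr_le0.
  apply/ler_addgt0Pr => e e0; rewrite add0r.
  have C1 : 0 < 2 * (CM + 1) by rewrite mulr_gt0 // ltr_wpDl.
  have [N1 hN1] := hyl _ (divr_gt0 e0 C1).
  have [N2 hN2] := small_inv (divr_gt0 e0 (ltr0Sn R 1)).
  set m := maxn N1 N2.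
  have h1 := hN1 m (leq_maxl _ _).
  have hmN : m.+1%:R^-1 <= N2.+1%:R^-1 :> R.
    by rewrite lef_pV2 ?posrE ?ltr0Sn // ler_nat ltnS leq_maxr.
  have h2 := hyn m.
  have tri : `|x - Ms yl| <= `|x - Ms (yn m)| + `|Ms (yn m) - Ms yl|.
    by apply: le_trans (ler_normD _ _); rewrite addrA subrK.
  have h3 : `|Ms (yn m) - Ms yl| <= CM * `|yl - yn m|.
    by rewrite -(linB lMs) distrC; exact: Msbound.
  move: h1; rewrite ltr_pdivlMr // => h1.
  move: hN2; rewrite ltr_pdivlMr // => hN2.
  have := normr_ge0 (yl - yn m).
  move: h1 h2 h3 hN2 hmN tri; set a := m.+1%:R^-1; set b := N2.+1%:R^-1.
  set u := `|yl - yn m|; set v := `|x - Ms (yn m)|; set w := `|Ms (yn m) - Ms yl|.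
  clearbody a b u v w => *; nra.
exists `|K| => h; have [f0 hf0] := sM h.
have [g [[y ->] hg]] := proj_ex iF cRg f0.
have eqM : M (Ms y) = h.
  have : M (f0 - Ms y) = 0.
    apply: (ipxx_eq0 (iV := iH)); rewrite hMs ip_sym; apply: hg.
    by exists (M (f0 - Ms y)).
  by rewrite (linB lM) hf0 => /eqP; rewrite subr_eq0 => /eqP <-.
exists (Ms y); split => //.
have n0 := normr_ge0 (Ms y).
have [->|hp] := eqVneq `|Ms y| 0; first by rewrite mulr_ge0.
have hp' : 0 < `|Ms y| by rewrite lt_def hp n0.
have hh : `|Ms y| ^+ 2 <= `|K| * `|h| * `|Ms y|.
  rewrite -(ipxx iF) -hMs eqM; apply: le_trans (ler_norm _) _.
  apply: le_trans (cauchy_schwarz _ _ _) _.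
  rewrite (mulrAC `|K|) (mulrC `|h|); apply: ler_wpM2r; [exact: normr_ge0 | exact: below'].
by rewrite expr2 ler_pM2r in hh.
Qed.
End OpenMap.


Section Main.
Variable R : realType.

Lemma pair_lin1 (U V : normedModType R) (a : R) (x y : U) :
  ((a *: x + y, 0) : U * V) = a *: (x, 0) + (y, 0).
Proof. by congr (_, _) => /=; rewrite ?scaler0 ?addr0. Qed.
Lemma pair_lin2 (U V : normedModType R) (a : R) (x y : V) :
  ((0, a *: x + y) : U * V) = a *: (0, x) + (0, y).
Proof. by congr (_, _) => /=; rewrite ?scaler0 ?addr0. Qed.
Lemma pair_split (U V : normedModType R) (x : U) (y : V) :
  ((x, y) : U * V) = (x, 0) + (0, y).
Proof. by congr (_, _) => /=; rewrite ?addr0 ?add0r. Qed.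
Lemma pair_norm1 (U V : normedModType R) (x : U) : `|((x, 0) : U * V)| = `|x|.
Proof. by rewrite prod_normE /= normr0; apply/max_idPl. Qed.
Lemma pair_norm2 (U V : normedModType R) (x : V) : `|((0, x) : U * V)| = `|x|.
Proof. by rewrite prod_normE /= normr0; apply/max_idPr. Qed.

Lemma bl_pos (U V : normedModType R) (f : U -> V) : bounded_linear f ->
  linP f /\ exists C, 0 <= C /\ forall x, `|f x| <= C * `|x|.
Proof.
move=> [lf [C hC]]; split => //; exists `|C|; split => // x.
by apply: le_trans (hC x) _; apply: ler_wpM2r; [exact: normr_ge0|exact: ler_norm].
Qed.

Lemma linP_add (U V : normedModType R) (f g : U -> V) :
  linP f -> linP g -> linP (fun x => f x + g x).
Proof. by move=> lf lg a x y; rewrite lf lg scalerDr addrACA. Qed.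
Lemma linP_opp (U V : normedModType R) (f : U -> V) :
  linP f -> linP (fun x => - f x).
Proof. by move=> lf a x y; rewrite lf opprD scalerN. Qed.

Lemma triple_transfer (V U : normedModType R) (A : V -> U) (W : set V) (S : set U) C n :
  linP A -> Defs.subspace W -> closed W -> (exists CA, forall x, `|A x| <= CA * `|x|) ->
  (forall h, exists x, [/\ W x, A x = h & `|x| <= C * `|h|]) ->
  (closed (W `&` A @^-1` S) /\ codim_eq W (W `&` A @^-1` S) n) <->
  (closed S /\ codim_eq setT S n).
Proof.
move=> lA sW cW [CA bA] sec.
have sur h : exists x, W x /\ A x = h by have [x [? ? _]] := sec h; exists x.
split=> [[c d]|[c d]]; split.
- exact: closed_push lA sW sec c.
- exact: codim_push lA sW sur d.
- exact: closed_pull lA bA cW c.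
- exact: codim_pull lA sW sur d.
Qed.

Lemma zmod1 (U : zmodType) (a b c d : U) : a + b - c = b - d + (d + a - c).
Proof. by rewrite [RHS]addrA [b - d + _]addrA subrK [b + a]addrC. Qed.
Lemma zmod2 (U : zmodType) (m q p b v : U) : m + q - p = b + v -> q - b + m - p = v.
Proof. move=> h. rewrite (addrAC q) (addrAC (q + m)) (addrC q) h (addrC b) addrK //. Qed.
Lemma zmod3 (U : zmodType) (x b : U) : x - b - x = - b.
Proof. by rewrite addrAC subrr add0r. Qed.
Lemma norm_fst (U V : normedModType R) (y : U * V) : `|y.1| <= `|y|.
Proof. by rewrite [`|y|]prod_normE le_max lexx. Qed.
Lemma norm_snd (U V : normedModType R) (y : U * V) : `|y.2| <= `|y|.
Proof. by rewrite [`|y|]prod_normE le_max lexx orbT. Qed.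

End Main.

Unset Implicit Arguments. Set Strict Implicit.

Theorem proposition3p4 (R : realType)
  (E F H0 H1 : completeNormedModType R)
  (iE : inner_product E) (iF : inner_product F)
  (iH0 : inner_product H0) (iH1 : inner_product H1)
  (L : E -> F) (r0 : E -> H0) (r1 : E -> H1)
  (hL : bounded_linear L) (hr0 : bounded_linear r0) (hr1 : bounded_linear r1)
  (iso0 : isomorphism (fun e => (r0 e, L e)))
  (iso1 : isomorphism (fun e => (r1 e, L e)))
  (onto01 : forall (h0 : H0) (h1 : H1), exists e, r0 e = h0 /\ r1 e = h1)
  (B0 : set H0) (B1 : set H1)
  (cB0 : closed_subspace B0) (cB1 : closed_subspace B1)
  (k : int) :
  let Q := Qmap L r0 r1 in
  let P0 := fun e => orth_proj iH0 (orth iH0 B0) (r0 e) in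
  let P1 := fun e => orth_proj iH1 (orth iH1 B1) (r1 e) in
  [<-> fredholm_pair B0 (Q @^-1` B1) k;
       fredholm_pair (Q @` B0) B1 k;
       fredholm_op setT
         [set y | orth iH0 B0 y.1.1 /\ orth iH1 B1 y.1.2]
         (fun e => (P0 e, P1 e, L e)) k;
       fredholm_op ([set e | P0 e = 0] `&` [set e | P1 e = 0]) setT L k].
Proof.
Proof.
move=> Q P0 P1.
have [lL [CL [CL0 bL]]] := bl_pos hL.
have [lr0 [C0 [C00 b0]]] := bl_pos hr0.
have [lr1 [C1 [C10 b1]]] := bl_pos hr1.
case: iso0 => _ [g0 [hg0 c0 c0']].
case: iso1 => _ [g1 [hg1 c1 c1']].
have [lg0 [Cg0 [Cg00 bg0]]] := bl_pos hg0.
have [lg1 [Cg1 [Cg10 bg1]]] := bl_pos hg1.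
have r0g0 p : r0 (g0 p) = p.1 by rewrite -[in RHS](c0' p).
have Lg0 p : L (g0 p) = p.2 by rewrite -[in RHS](c0' p).
have r1g1 p : r1 (g1 p) = p.1 by rewrite -[in RHS](c1' p).
have Lg1 p : L (g1 p) = p.2 by rewrite -[in RHS](c1' p).
have hQ h : Q h = r1 (g0 (h, 0)).
  rewrite /Q /Qmap; set e := xget _ _.
  have [Le r0e] : [set e | L e = 0 /\ r0 e = h] e.
    by apply: xgetPex; exists (g0 (h, 0)); split; [exact: Lg0 | exact: r0g0].
  have -> : ((h, 0) : H0 * F) = (r0 e, L e) by rewrite Le r0e.
  by rewrite c0.
pose Qi h := r0 (g1 (h, 0)).
pose M f := r1 (g0 (0, f)).
pose M1 f := r0 (g1 (0, f)).
have lQ : linP Q by move=> a x y; rewrite !hQ pair_lin1 lg0 lr1.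
have lQi : linP Qi by move=> a x y; rewrite /Qi pair_lin1 lg1 lr0.
have lM : linP M by move=> a x y; rewrite /M pair_lin2 lg0 lr1.
have lM1 : linP M1 by move=> a x y; rewrite /M1 pair_lin2 lg1 lr0.
have dec1 e : r1 e = Q (r0 e) + M (L e).
  by rewrite hQ /M -(linD lr1) -(linD lg0) -pair_split c0.
have dec0 e : r0 e = Qi (r1 e) + M1 (L e).
  by rewrite /Qi /M1 -(linD lr0) -(linD lg1) -pair_split c1.
have QQi h : Q (Qi h) = h.
  have := dec1 (g1 (h, 0)); rewrite Lg1 /= (lin0 lM) addr0 r1g1 /=.
  by move=> {2}->.
have QiQ h : Qi (Q h) = h.
  have := dec0 (g0 (h, 0)); rewrite Lg0 /= (lin0 lM1) addr0 r0g0 /= -hQ.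
  by move=> {2}->.
have bQi h : `|Qi h| <= (C0 * Cg1) * `|h|.
  apply: le_trans (b0 _) _; rewrite -mulrA; apply: ler_wpM2l => //.
  by apply: le_trans (bg1 _) _; rewrite pair_norm1.
have bQ h : `|Q h| <= (C1 * Cg0) * `|h|.
  rewrite hQ; apply: le_trans (b1 _) _; rewrite -mulrA; apply: ler_wpM2l => //.
  by apply: le_trans (bg0 _) _; rewrite pair_norm1.
have bM f : `|M f| <= (C1 * Cg0) * `|f|.
  apply: le_trans (b1 _) _; rewrite -mulrA; apply: ler_wpM2l => //.
  by apply: le_trans (bg0 _) _; rewrite pair_norm2.
have sM h : exists f, M f = h.
  have [e [e0 e1]] := onto01 0 h; exists (L e).
  by have := dec1 e; rewrite e0 e1 (lin0 lQ) add0r.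
have [CM secM] := open_map iF iH1 lM bM sM.
have P0E e : P0 e = 0 <-> B0 (r0 e) := projB_0 iH0 cB0 (r0 e).
have P1E e : P1 e = 0 <-> B1 (r1 e) := projB_0 iH1 cB1 (r1 e).
have P0in e : orth iH0 B0 (P0 e) := projB_in iH0 (r0 e).
have P1in e : orth iH1 B1 (P1 e) := projB_in iH1 (r1 e).
have P0rem e : B0 (r0 e - P0 e) := projB_rem iH0 cB0 (r0 e).
have P1rem e : B1 (r1 e - P1 e) := projB_rem iH1 cB1 (r1 e).
have P0eq e y : orth iH0 B0 y -> B0 (r0 e - y) -> P0 e = y.
  by move=> h1 h2; apply: projB_eq.
have P1eq e y : orth iH1 B1 y -> B1 (r1 e - y) -> P1 e = y.
  by move=> h1 h2; apply: projB_eq.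
have [sB0 _] := cB0; have [sB1 _] := cB1.
set S := sum_set (Q @` B0) B1.
have II_def : fredholm_pair (Q @` B0) B1 k <->
  exists a b : nat, [/\ dim_eq (Q @` B0 `&` B1) a, closed S /\ codim_eq setT S b
     & k = (a%:Z - b%:Z)%R].
  split => [[a [b [d c cd e]]]|[a [b [d [c cd] e]]]]; exists a, b; split => //.
have EqI : sum_set B0 (Q @^-1` B1) = setT `&` Q @^-1` S.
  apply/seteqP; split => x.
  - move=> [u [v [Bu Bv ->]]]; split => //; exists (Q u), (Q v); split => //.
    exact: (linD lQ).
  - move=> [_ [u [v [[b Bb <-] Bv hx]]]]; exists b, (Qi v); split => //.
    + by rewrite /preimage /= QQi.
    + by rewrite -(QiQ x) hx (linD lQi) QiQ.
have Ieq : fredholm_pair B0 (Q @^-1` B1) k <-> fredholm_pair (Q @` B0) B1 k.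
  have dimI a : dim_eq (B0 `&` Q @^-1` B1) a <-> dim_eq (Q @` B0 `&` B1) a.
    split; apply: dim_transfer.
    - exact: lQ.
    - exact: lQi.
    - by move=> y [[b Bb <-] By]; split; rewrite /preimage /= ?QiQ ?QQi.
    - by move=> x [Bx Qx]; split => //; exists x.
    - by move=> x _; rewrite QiQ.
    - by move=> y _; rewrite QQi.
    - exact: lQi.
    - exact: lQ.
    - by move=> x [Bx Qx]; split => //; exists x.
    - by move=> y [[b Bb <-] By]; split; rewrite /preimage /= ?QiQ ?QQi.
    - by move=> y _; rewrite QQi.
    - by move=> x _; rewrite QiQ.
  have tr b := triple_transfer S b lQ (subspaceT _) closedT
    (ex_intro _ _ bQ) (fun h => ex_intro _ (Qi h) (And3 I (QQi h) (bQi h))).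
  rewrite II_def /fredholm_pair EqI.
  split => [[a [b [d c cd e]]]|[a [b [d cd e]]]]; exists a, b; split => //.
  - exact/dimI.
  - by apply/tr.
  - exact/dimI.
  - by case: (proj2 (tr b) cd).
  - by case: (proj2 (tr b) cd).
set D := [set e | P0 e = 0] `&` [set e | P1 e = 0].
have EqIV : L @` D = setT `&` M @^-1` S.
  apply/seteqP; split => f.
  - move=> [e [/P0E h0 /P1E h1] <-]; split => //.
    exists (Q (- r0 e)), (r1 e); split => //.
    + by exists (- r0 e) => //; apply: subN.
    + by rewrite (linN lQ) (dec1 e) addKr.
  - move=> [_ [u [v [[b Bb <-] Bv hf]]]].
    exists (g0 (- b, f)); last by rewrite Lg0.
    split; rewrite /=.
    + by apply/P0E; rewrite r0g0 /=; exact: subN.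
    + by apply/P1E; rewrite dec1 r0g0 Lg0 /= hf (linN lQ) addKr.
have dimIV a : dim_eq (D `&` [set x | L x = 0]) a <-> dim_eq (Q @` B0 `&` B1) a.
  have lpsi : linP (fun h : H1 => g1 (h, 0)) by move=> c x y; rewrite pair_lin1 lg1.
  have XY : forall e, (D `&` [set x | L x = 0]) e -> (Q @` B0 `&` B1) (r1 e).
    move=> e [[/P0E h0 /P1E h1] he]; split => //.
    by exists (r0 e) => //; rewrite (dec1 e) he (lin0 lM) addr0.
  have YX : forall y, (Q @` B0 `&` B1) y -> (D `&` [set x | L x = 0]) (g1 (y, 0)).
    move=> y [[b Bb <-] By]; split; [split|]; rewrite /=.
    + by apply/P0E; rewrite dec0 r1g1 Lg1 /= (lin0 lM1) addr0 QiQ.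
    + by apply/P1E; rewrite r1g1.
    + by rewrite Lg1.
  have pp : forall e, (D `&` [set x | L x = 0]) e -> g1 (r1 e, 0) = e.
    by move=> e [_ he]; rewrite -he c1.
  have qq : forall y, (Q @` B0 `&` B1) y -> r1 (g1 (y, 0)) = y.
    by move=> y _; rewrite r1g1.
  split; apply: dim_transfer; eassumption.
have secM' h : exists x, [/\ setT x, M x = h & `|x| <= CM * `|h|].
  by have [f [hf hb]] := secM h; exists f.
have IVeq : fredholm_op D setT L k <-> fredholm_pair (Q @` B0) B1 k.
  have tr b := triple_transfer S b lM (subspaceT _) closedT (ex_intro _ _ bM) secM'.
  rewrite II_def /fredholm_op EqIV.
  split => [[_ [a [b [d c cd e]]]]|[a [b [d cd e]]]].
  - exists a, b; split => //; [exact/dimIV | exact/(tr b)].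
  - split => //; exists a, b; split => //.
    + exact/dimIV.
    + by case: (proj2 (tr b) cd).
    + by case: (proj2 (tr b) cd).
set T := (fun e => (P0 e, P1 e, L e)).
set Wt := [set y : H0 * H1 * F | orth iH0 B0 y.1.1 /\ orth iH1 B1 y.1.2].
pose Phi := fun y : H0 * H1 * F => M y.2 + Q y.1.1 - y.1.2.
have lPhi : linP Phi.
  apply: linP_add; first apply: linP_add.
  - by move=> a x y; rewrite /= lM.
  - by move=> a x y; rewrite /= lQ.
  - by apply: linP_opp => a x y.
have bPhi y : `|Phi y| <= (2 * (C1 * Cg0) + 1) * `|y|.
  have K0 : 0 <= C1 * Cg0 by rewrite mulr_ge0.
  have h1 : `|Phi y| <= `|M y.2| + `|Q y.1.1| + `|y.1.2|.
    by apply: le_trans (ler_normB _ _) _; rewrite lerD2r ler_normD.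
  have h2 := bM y.2; have h3 := bQ y.1.1.
  have h4 := norm_snd y; have h5 := norm_fst y.
  have h6 := norm_fst y.1; have h7 := norm_snd y.1.
  have h8 : (C1 * Cg0) * `|y.2| <= (C1 * Cg0) * `|y| by apply: ler_wpM2l.
  have h9 : (C1 * Cg0) * `|y.1.1| <= (C1 * Cg0) * `|y|.
    by apply: ler_wpM2l => //; apply: le_trans h6 h5.
  move: h1 h2 h3 h4 h5 h6 h7 h8 h9.
  set a := `|Phi y|; set b := `|M y.2|; set c := `|Q y.1.1|; set d := `|y.1.2|.
  set e := `|y.2|; set f := `|y.1.1|; set g := `|y|; set w := `|y.1|; set K := C1 * Cg0.
  clearbody a b c d e f g w K => *; nra.
have sW : Defs.subspace Wt.
  split; first by split; apply: sub0; apply: orth_sub.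
  by move=> a x y [x1 x2] [y1 y2]; split; apply: (proj2 (orth_sub _ _)).
have cW : closed Wt.
  apply/closed_epsP => x hx; split.
  - apply: (proj1 (closed_epsP _) (@orth_closed _ _ iH0 B0)) => e e0.
    have [a [[a1 a2] ha]] := hx e e0; exists a.1.1; split => //.
    by apply: le_lt_trans ha; apply: le_trans (norm_fst (x - a).1) (norm_fst (x - a)).
  - apply: (proj1 (closed_epsP _) (@orth_closed _ _ iH1 B1)) => e e0.
    have [a [[a1 a2] ha]] := hx e e0; exists a.1.2; split => //.
    by apply: le_lt_trans ha; apply: le_trans (norm_snd (x - a).1) (norm_fst (x - a)).
have secPhi h : exists y, [/\ Wt y, Phi y = h & `|y| <= CM * `|h|].
  have [f [hf hb]] := secM h; exists ((0 : H0 * H1), f); split.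
  - by split; apply: sub0; apply: orth_sub.
  - by rewrite /Phi /= (lin0 lQ) addr0 subr0.
  - by rewrite pair_norm2.
have EqIII1 : setT `&` [set x | T x = 0] = D `&` [set x | L x = 0].
  apply/seteqP; split => e.
  - move=> [_ hT]; split; [split|] => /=.
    + exact: (congr1 (fun p => p.1.1) hT).
    + exact: (congr1 (fun p => p.1.2) hT).
    + exact: (congr1 (fun p => p.2) hT).
  - by move=> [[h0 h1] hl]; split => //; rewrite /T /= h0 h1 hl.
have EqIII2 : T @` setT = Wt `&` Phi @^-1` S.
  apply/seteqP; split => y.
  - move=> [e _ <-]; split; first by split; [exact: P0in|exact: P1in].
    exists (Q (P0 e - r0 e)), (r1 e - P1 e); split.
    + exists (P0 e - r0 e) => //; rewrite -opprB; apply: subN => //; exact: P0rem.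
    + exact: P1rem.
    + by rewrite /Phi /T /= (linB lQ) (dec1 e); apply: zmod1.
  - case: y => [[y11 y12] y2]; move=> [[w0 w1] [u [v [[b Bb <-] Bv hPhi]]]].
    exists (g0 (y11 - b, y2)) => //.
    rewrite /T; congr (_, _, _).
    + by apply: P0eq => //; rewrite r0g0 /= zmod3; apply: subN.
    + apply: P1eq => //; rewrite dec1 r0g0 Lg0 /= (linB lQ).
      by rewrite (zmod2 hPhi).
    + by rewrite Lg0.
have IIIeq : fredholm_op setT Wt T k <-> fredholm_pair (Q @` B0) B1 k.
  have tr b := triple_transfer S b lPhi sW cW (ex_intro _ _ bPhi) secPhi.
  rewrite II_def /fredholm_op EqIII1 EqIII2.
  split => [[_ [a [b [d c cd e]]]]|[a [b [d cd e]]]].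
  - exists a, b; split => //; [exact/dimIV | exact/(tr b)].
  - split; first by move=> x _; split; [exact: P0in | exact: P1in].
    exists a, b; split => //.
    + exact/dimIV.
    + by case: (proj2 (tr b) cd).
    + by case: (proj2 (tr b) cd).
tfae.
- by move/Ieq.
- by move/IIIeq.
- by move/IIIeq/IVeq.
- by move/IVeq/Ieq.
Qed.
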